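(* Let $G=(V,E)$ be a finite graph with at least one vertex and let $w\ge k>0$ be integers. Let $\mathcal F^w_k$ be the set of all stars $\sigma=\{(A_i,B_i):i=0,\dots,n\}\subseteq\vec S_k$ with $\bigl|\bigcap_{i=0}^nB_i\bigr|<w$. Then $\vec S_k$ is $\mathcal F^w_k$-separable: for all $\vec r,\vec r\,'\in\vec S_k$ with $\vec r\le\vec r\,'$ such that $\mathcal F^w_k$ forces neither $\vec r$ nor $\overleftarrow{r'}$, there is $(X,Y)\in\vec S_k$ that is $\mathcal F^w_k$-linked to $\vec r$ and such that $(Y,X)$ is $\mathcal F^w_k$-linked to $\overleftarrow{r'}$.
   Context: An oriented vertex separation of $G$ is an ordered pair $(A,B)$ with $A\cup B=V$ and no edge between $A\setminus B$ and $B\setminus A$. They form a universe $\vec U$ with $(A,B)\le(C,D)$ iff $A\subseteq C$, $B\supseteq D$; $(A,B)^*=(B,A)$; $(A,B)\vee(C,D)=(A\cup C,B\cap D)$; $(A,B)\wedge(C,D)=(A\cap C,B\cup D)$. $\vec S_k=\{(A,B)\in\vec U:|A\cap B|<k\}$, with separations $s=\{\vec s,\vec s^{\,*}\}$; write $\overleftarrow s=\vec s^{\,*}$; $s$ is degenerate if $\vec s=\overleftarrow s$; $\vec r$ is trivial if some separation $s$ has $\vec r<\vec s$ and $\vec r<\overleftarrow s$. A star is a nonempty set $\sigma$ with $\vec r\le\overleftarrow s$ for all distinct $\vec r,\vec s\in\sigma$. $\mathcal F$ forces $\vec r$ if $\{\overleftarrow r\}\in\mathcal F$ or $r$ is degenerate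 (unforced elements are nontrivial and nondegenerate). For nontrivial nondegenerate $\vec r$, $\vec S_{\ge\vec r}$ is the set of all orientations of separations of $\vec S_k$ having an orientation $\ge\vec r$; for $\vec s_0\ge\vec r$ the shifting map $f:\vec S_{\ge\vec r}\to\vec U$ is $f(\vec s)=\vec s\vee\vec s_0$, $f(\overleftarrow s)=(\vec s\vee\vec s_0)^*$ for all $\vec s\in\vec S_{\ge\vec r}\setminus\{\overleftarrow r\}$ with $\vec s\ge\vec r$. $\vec s_0$ is linked to $\vec r$ if $\vec s_0\ge\vec r$ and $\vec s\vee\vec s_0\in\vec S_k$ for all $\vec s\in\vec S_k$ with $\vec s\ge\vec r$, $\vec s\ne\overleftarrow r$; it is $\mathcal F$-linked to $\vec r$ if moreover $f(\sigma)\in\mathcal F$ for every star $\sigma\in\mathcal F$ with $\sigma\subseteq\vec S_{\ge\vec r}\setminus\{\overleftarrow r\}$ having an element $\ge\vec r$. *)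

(* Defs.v *)
From mathcomp Require Import all_boot.
Set Implicit Arguments. Unset Strict Implicit. Unset Printing Implicit Defensive.

Section Seps.
Variable V : finType.

Definition osep := ({set V} * {set V})%type.

Definition is_sep (e : rel V) (s : osep) : bool :=
  (s.1 :|: s.2 == setT) &&
  [forall x, forall y, (x \in s.1 :\: s.2) ==> (y \in s.2 :\: s.1) ==> ~~ e x y].

Definition Sk (e : rel V) (k : nat) : {set osep} :=
  [set s | is_sep e s & #|s.1 :&: s.2| < k].

Definition leS (s t : osep) : bool := (s.1 \subset t.1) && (t.2 \subset s.2).

Definition osinv (s : osep) : osep := (s.2, s.1).

Definition join (s t : osep) : osep := (s.1 :|: t.1, s.2 :&: t.2).

Definition is_star (sigma : {set osep}) : bool :=
  (sigma != set0) &&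
  [forall r in sigma, forall s in sigma, (r != s) ==> leS r (osinv s)].

Definition Fw (e : rel V) (k w : nat) (sigma : {set osep}) : bool :=
  [&& is_star sigma, sigma \subset Sk e k & #|\bigcap_(s in sigma) (s.2 : {set V})| < w].

Definition forces (F : pred {set osep}) (r : osep) : bool :=
  F [set osinv r] || (r == osinv r).

Definition Sge (e : rel V) (k : nat) (r : osep) : {set osep} :=
  [set t in Sk e k | leS r t || leS r (osinv t)].

(* shifting map f: f(s) = s ∨ s0 for s >= r, f(s^star) = (s ∨ s0)^star *)
Definition shift (r s0 t : osep) : osep :=
  if leS r t then join t s0 else osinv (join (osinv t) s0).

Definition linked (e : rel V) (k : nat) (r s0 : osep) : Prop :=
  leS r s0 /\
  (forall s, s \in Sk e k -> leS r s -> s != osinv r -> join s s0 \in Sk e k).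

Definition Flinked (F : pred {set osep}) (e : rel V) (k : nat) (r s0 : osep) : Prop :=
  linked e k r s0 /\
  (forall sigma : {set osep}, is_star sigma -> F sigma ->
     sigma \subset (Sge e k r :\ osinv r) ->
     (exists2 s, s \in sigma & leS r s) ->
     F (shift r s0 @: sigma)).

End Seps.

(* Main.v *)
Require Import Defs.
From mathcomp Require Import all_boot.
Set Implicit Arguments. Unset Strict Implicit. Unset Printing Implicit Defensive.

Lemma is_sepP (V : finType) (e : rel V) (s : osep V) :
  reflect ((forall v, v \in s.1 \/ v \in s.2) /\
           (forall x y, x \in s.1 -> x \notin s.2 -> y \in s.2 -> y \notin s.1 -> ~~ e x y))
          (is_sep e s).
Proof.
apply: (iffP andP) => -[H1 H2]; split.
- move=> v; have: v \in s.1 :|: s.2 by rewrite (eqP H1) inE.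
  by rewrite inE => /orP.
- move=> x y hx hx' hy hy'.
  move/forallP: H2 => /(_ x) /forallP /(_ y).
  by rewrite !inE hx hx' hy hy'.
- apply/eqP/setP => v; rewrite !inE; by case: (H1 v) => ->; rewrite ?orbT.
- apply/forallP => x; apply/forallP => y; rewrite !inE.
  apply/implyP => /andP[hx' hx]; apply/implyP => /andP[hy' hy]; exact: H2.
Qed.

Lemma join_sep (V : finType) (e : rel V) (s t : osep V) : is_sep e s -> is_sep e t -> is_sep e (join s t).
Proof.
move=> /is_sepP[U1 E1] /is_sepP[U2 E2]; apply/is_sepP; split => /=.
- move=> v; rewrite !inE.
  case: (U1 v) => h1; first by left; rewrite h1.
  case: (U2 v) => h2; first by left; rewrite h2 orbT.
  by right; rewrite h1 h2.
- move=> x y; rewrite !inE.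
  move: (E1 x y) (E2 x y) (U1 x) (U2 x) (U1 y) (U2 y).
  case: (x \in s.1); case: (x \in s.2); case: (x \in t.1); case: (x \in t.2);
  case: (y \in s.1); case: (y \in s.2); case: (y \in t.1); case: (y \in t.2) => //=;
  intuition.
Qed.

From mathcomp Require Import zify.

Definition sord (V : finType) (s : osep V) := #|s.1 :&: s.2|.
Definition meet (V : finType) (s t : osep V) : osep V := (s.1 :&: t.1, s.2 :|: t.2).

Lemma osinvK (V : finType) (s : osep V) : osinv (osinv s) = s.
Proof. by case: s. Qed.

Lemma inv_sep (V : finType) (e : rel V) (e_sym : symmetric e) (s : osep V) :
  is_sep e s -> is_sep e (osinv s).
Proof.
move=> /is_sepP[U E]; apply/is_sepP; split => /=.
- by move=> v; case: (U v); [right|left].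
- by move=> x y h1 h2 h3 h4; rewrite e_sym; apply: E.
Qed.

Lemma meet_sep (V : finType) (e : rel V) (e_sym : symmetric e) (s t : osep V) :
  is_sep e s -> is_sep e t -> is_sep e (meet s t).
Proof.
move=> hs ht.
have := inv_sep e_sym (join_sep (inv_sep e_sym hs) (inv_sep e_sym ht)).
by [].
Qed.

Lemma sordI (V : finType) (s : osep V) : sord (osinv s) = sord s.
Proof. by rewrite /sord setIC. Qed.

Lemma Sk_inv (V : finType) (e : rel V) (e_sym : symmetric e) k (s : osep V) :
  s \in Sk e k -> osinv s \in Sk e k.
Proof.
rewrite !inE => /andP[h1 h2]; apply/andP; split; first exact: inv_sep.
by rewrite /= setIC.
Qed.

Lemma submod (V : finType) (a b : osep V) :
  sord (join a b) + sord (meet a b) <= sord a + sord b.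
Proof.
rewrite /sord -[X in _ <= X]cardsUI -[X in X <= _]cardsUI; apply: leq_add; apply: subset_leq_card; apply/subsetP => v;
rewrite !inE;
case: (v \in a.1); case: (v \in a.2); case: (v \in b.1); case: (v \in b.2) => //=.
Qed.

Lemma leS_trans (V : finType) (a b c : osep V) : leS a b -> leS b c -> leS a c.
Proof.
move=> /andP[h1 h2] /andP[h3 h4]; apply/andP; split.
- exact: subset_trans h1 h3.
- exact: subset_trans h4 h2.
Qed.

Lemma leS_inv (V : finType) (a b : osep V) : leS (osinv a) (osinv b) = leS b a.
Proof. by rewrite /leS andbC. Qed.

Lemma leS_refl (V : finType) (a : osep V) : leS a a.
Proof. by rewrite /leS !subxx. Qed.

Lemma join_mono (V : finType) (a b c : osep V) : leS a b -> leS (join a c) (join b c).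
Proof.
move=> /andP[/subsetP h1 /subsetP h2]; apply/andP; split; apply/subsetP => v;
rewrite !inE.
- by case/orP => [/h1 -> //| ->]; rewrite orbT.
- by case/andP => /h2 -> ->.
Qed.

Lemma leS_meet (V : finType) (r a b : osep V) : leS r a -> leS r b -> leS r (meet a b).
Proof.
move=> /andP[/subsetP h1 /subsetP h2] /andP[/subsetP h3 /subsetP h4]; apply/andP;
split; apply/subsetP => v; rewrite !inE.
- by move=> h; rewrite h1 // h3.
- by case/orP => [/h2|/h4].
Qed.

Lemma meet_le_r (V : finType) (a b : osep V) : leS (meet a b) b.
Proof.
apply/andP; split; apply/subsetP => v; rewrite !inE.
- by case/andP.
- by move=> ->; rewrite orbT.
Qed.

Lemma unforced (V : finType) (e : rel V) (e_sym : symmetric e) k w (r : osep V) :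
  r \in Sk e k -> ~~ forces (Fw e k w) r -> w <= #|r.1|.
Proof.
move=> rS; rewrite /forces negb_or => /andP[nF _].
rewrite leqNgt; apply/negP => lt; move/negP: nF; apply.
apply/and3P; split.
- apply/andP; split.
  + by apply/set0Pn; exists (osinv r); rewrite inE.
  + apply/forallP => a; apply/implyP; rewrite inE => /eqP->.
    apply/forallP => b; apply/implyP; rewrite inE => /eqP->.
    by rewrite eqxx.
- by rewrite sub1set; apply: Sk_inv.
- by rewrite big_set1.
Qed.

Lemma main_link (V : finType) (e : rel V) (e_sym : symmetric e) (k w : nat)
  (r q s0 : osep V) : r \in Sk e k -> w <= #|r.1| -> k <= w ->
  is_sep e s0 -> leS r s0 -> leS s0 q ->
  (forall z, is_sep e z -> leS r z -> leS z q -> sord s0 <= sord z) ->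
  Flinked (Fw e k w) e k r s0.
Proof.
move=> rS rw kw s0sep rs0 s0q mn.
have lk : forall s, s \in Sk e k -> leS r s -> join s s0 \in Sk e k.
  move=> s; rewrite !inE => /andP[ssep sk] rs; apply/andP; split.
    exact: join_sep.
  have h1 := submod s s0.
  have h2 : sord s0 <= sord (meet s s0).
    apply: mn; [exact: meet_sep | exact: leS_meet | exact: leS_trans (meet_le_r s s0) s0q].
  change (is_true (sord s < k)) in sk; change (is_true (sord (join s s0) < k)).
  lia.
have nontriv : ~~ leS r (osinv r).
  apply/negP => /andP[h _].
  move: rS; rewrite inE => /andP[_].
  rewrite (setIidPl h); lia.
split; first by split => // s sS rs _; apply: lk.
move=> sigma Hst HF Hsub [s hs rs].
case/and3P: HF => _ sSk Hc.
have st : forall a b, a \in sigma -> b \in sigma -> a != b -> leS a (osinv b).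
  case/andP: Hst => _ /forallP H a b ha hb hab.
  by move: (H a) => /implyP/(_ ha)/forallP/(_ b)/implyP/(_ hb)/implyP/(_ hab).
have tS : forall t, t \in sigma -> t \in Sk e k by move=> t; apply: (subsetP sSk).
have tGe : forall t, t \in sigma -> leS r t || leS r (osinv t).
  move=> t /(subsetP Hsub); rewrite !inE => /andP[_ /andP[_ ->]] //.
have notr : forall t, t \in sigma -> t != s -> ~~ leS r t.
  move=> t ht tns; apply/negP => rt.
  have := st t s ht hs tns => ts.
  move: nontriv; rewrite (leS_trans rt (leS_trans ts _)) //.
  by rewrite leS_inv.
have fs : shift r s0 s = join s s0 by rewrite /shift rs.
have ft : forall t, t \in sigma -> t != s -> shift r s0 t = osinv (join (osinv t) s0).
  by move=> t ht tns; rewrite /shift (negbTE (notr t ht tns)).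
have rt : forall t, t \in sigma -> t != s -> leS r (osinv t).
  move=> t ht tns; have := tGe t ht; by rewrite (negbTE (notr t ht tns)).
apply/and3P; split.
- apply/andP; split.
  + by rewrite imset_eq0; case/andP: Hst.
  + apply/forallP => a; apply/implyP => /imsetP[t1 h1 ->].
    apply/forallP => b; apply/implyP => /imsetP[t2 h2 ->]; apply/implyP => neq.
    have t12 : t1 != t2 by apply: contraNneq neq => ->.
    case: (eqVneq t1 s) => [e1|n1]; case: (eqVneq t2 s) => [e2|n2].
    * by rewrite e1 e2 eqxx in t12.
    * rewrite e1 fs (ft t2 h2 n2) osinvK; apply: join_mono.
      by apply: st => //; rewrite -e1.
    * rewrite e2 fs (ft t1 h1 n1) leS_inv; apply: join_mono.
      by apply: st => //; rewrite eq_sym -e2.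
    * rewrite (ft t1 h1 n1) (ft t2 h2 n2) osinvK.
      have := st t1 t2 h1 h2 t12.
      move=> /andP[/subsetP a1 /subsetP a2]; apply/andP; split; apply/subsetP => v;
      rewrite !inE /=.
      -- by case/andP => /a1 -> _.
      -- by case/andP => /a2 -> _.
- apply/subsetP => u /imsetP[t ht ->]; case: (eqVneq t s) => [->|n].
  + by rewrite fs; exact: lk (tS s hs) rs.
  + rewrite ft //; apply: Sk_inv => //; apply: lk; [exact: Sk_inv (tS t ht) | exact: rt].
- pose T2 := [set v | [forall t in sigma, (t != s) ==> (v \in t.2)]].
  pose T1 := [set v | [exists t in sigma, (t != s) && (v \in t.1)]].
  pose C := \bigcap_(t in sigma) t.2.
  pose z : osep V := (s0.1 :&: T2, s0.2 :|: T1).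
  have ts : forall t, t \in sigma -> t != s -> (t.1 \subset s.2) && (s.1 \subset t.2).
    by move=> t ht tns; exact: st t s ht hs tns.
  have T2P : forall v t, v \in T2 -> t \in sigma -> t != s -> v \in t.2.
    move=> v t; rewrite inE => /forallP /(_ t) /implyP H ht tns.
    by move: (H ht) => /implyP; apply.
  have nT2P : forall v, v \notin T2 -> exists2 t, t \in sigma & (t != s) && (v \notin t.2).
    move=> v; rewrite inE negb_forall => /existsP[t].
    rewrite negb_imply => /andP[ht]; rewrite negb_imply => H.
    by exists t.
  have T1P : forall v, v \in T1 -> exists2 t, t \in sigma & (t != s) && (v \in t.1).
    by move=> v; rewrite inE => /existsP[t /andP[ht H]]; exists t.
  have T2I : forall v, (forall t, t \in sigma -> t != s -> v \in t.2) -> v \in T2.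
    move=> v H; rewrite inE; apply/forallP => t; apply/implyP => ht; apply/implyP; exact: H.
  have T1I : forall v t, t \in sigma -> t != s -> v \in t.1 -> v \in T1.
    move=> v t ht tns vt; rewrite inE; apply/existsP; exists t; by rewrite ht tns vt.
  clearbody T1 T2.
  have tsep : forall t, t \in sigma -> is_sep e t.
    by move=> t /tS; rewrite inE => /andP[].
  move/is_sepP: (s0sep) => [U0 E0].
  have zsep : is_sep e z.
    apply/is_sepP; split => /=.
    - move=> v; rewrite !inE.
      case: (boolP (v \in s0.1)) => vX /=; last first.
        by right; case: (U0 v) => h; [rewrite h in vX | rewrite h].
      case: (boolP (v \in T2)) => vT; first by left.
      right; case: (nT2P v vT) => t ht /andP[tns vt].
      have := (proj1 (is_sepP _ _ (tsep t ht))) v; rewrite (negbTE vt) => -[] // vt1.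
      by rewrite (T1I v t ht tns vt1) orbT.
    - move=> x y; rewrite !inE negb_or negb_and => /andP[xX xT] /andP[xY xT1].
      case/orP => [yY|yT1].
      + case/orP => [yX | yT2]; first exact: E0.
        case: (nT2P y yT2) => t ht /andP[tns yt2].
        have yt1 : y \in t.1.
          by case: ((proj1 (is_sepP _ _ (tsep t ht))) y) => // h; rewrite h in yt2.
        have xt2 := T2P x t xT ht tns.
        have xt1 : x \notin t.1.
          apply/negP => xt1; move/negP: xT1; apply; exact: T1I xt1.
        rewrite e_sym; exact: ((proj2 (is_sepP _ _ (tsep t ht))) y x yt1 yt2 xt2 xt1).
      + case/orP => [yX | yT2].
        * have yY : y \in s0.2 by case: (U0 y) => // h; rewrite h in yX.
          exact: E0.
        * case: (nT2P y yT2) => t ht /andP[tns yt2].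
          have yt1 : y \in t.1.
            by case: ((proj1 (is_sepP _ _ (tsep t ht))) y) => // h; rewrite h in yt2.
          have xt2 := T2P x t xT ht tns.
          have xt1 : x \notin t.1.
            apply/negP => xt1; move/negP: xT1; apply; exact: T1I xt1.
          rewrite e_sym; exact: ((proj2 (is_sepP _ _ (tsep t ht))) y x yt1 yt2 xt2 xt1).
  have rz : leS r z.
    move: (rs0) (rs) => /andP[/subsetP a1 /subsetP a2] /andP[/subsetP b1 /subsetP b2].
    apply/andP; split; apply/subsetP => v; rewrite !inE.
    - move=> vr; rewrite a1 //=; apply: T2I => t ht tns.
      by case/andP: (ts t ht tns) => _ /subsetP H; apply: H; apply: b1.
    - case/orP; first exact: a2.
      move=> vT1; case: (T1P v vT1) => t ht /andP[tns vt].
      by apply: b2; case/andP: (ts t ht tns) => /subsetP H _; apply: H.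
  have zq : leS z q.
    move: s0q => /andP[/subsetP a1 /subsetP a2]; apply/andP; split;
    apply/subsetP => v; rewrite !inE.
    - by case/andP => /a1.
    - by move/a2 => ->.
  have hmin := mn z zsep rz zq.
  have CP : forall v, v \in C = [forall t in sigma, v \in t.2].
    move=> v; apply/bigcapP/forallP => H t.
    + by apply/implyP => ht; apply: H.
    + by move=> ht; move: (H t) => /implyP; apply.
  have sub1 : z.1 :&: z.2 \subset (s0.1 :&: s0.2 :&: T2) :|: (C :\: s0.2).
    apply/subsetP => v; rewrite /= !inE => /andP[/andP[vX vT] /orP[vY|vT1]].
    + by rewrite vX vY vT.
    + case: (boolP (v \in s0.2)) => vY; first by rewrite vX vT.
      rewrite andbF /= CP; apply/forallP => t; apply/implyP => ht.
      case: (eqVneq t s) => [->|tns]; last exact: T2P vT ht tns.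
      case: (T1P v vT1) => t' ht' /andP[tns' vt'].
      by case/andP: (ts t' ht' tns') => /subsetP H _; apply: H.
  have c1 : #|z.1 :&: z.2| <= #|s0.1 :&: s0.2 :&: T2| + #|C :\: s0.2|.
    apply: leq_trans (subset_leq_card sub1) _; rewrite cardsU; exact: leq_subr.
  have c2 := cardsID T2 (s0.1 :&: s0.2).
  have c3 := cardsID s0.2 C.
  pose C' := \bigcap_(u in [set shift r s0 x | x in sigma]) u.2.
  have sub2 : C' \subset (C :&: s0.2) :|: (s0.1 :&: s0.2 :\: T2).
    apply/subsetP => v /bigcapP Hv.
    have Hf : forall t, t \in sigma -> v \in (shift r s0 t).2.
      by move=> t ht; apply: Hv; apply: imset_f.
    have := Hf s hs; rewrite fs /= inE => /andP[vs vY].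
    rewrite !inE vY /= andbT.
    case: (boolP (v \in T2)) => vT /=.
    + rewrite orbF CP; apply/forallP => t; apply/implyP => ht.
      case: (eqVneq t s) => [->|tns] //; exact: T2P vT ht tns.
    + case: (nT2P v vT) => t ht /andP[tns vt].
      have := Hf t ht; rewrite ft //= inE (negbTE vt) /= => ->.
      by rewrite orbT.
  have c4 : #|C'| <= #|C :&: s0.2| + #|s0.1 :&: s0.2 :\: T2|.
    apply: leq_trans (subset_leq_card sub2) _; rewrite cardsU; exact: leq_subr.
  have hb : #|s0.1 :&: s0.2 :\: T2| <= #|C :\: s0.2|.
    rewrite -(leq_add2l #|s0.1 :&: s0.2 :&: T2|) c2; exact: leq_trans hmin c1.
  apply: leq_ltn_trans c4 _; apply: leq_ltn_trans _ Hc.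
  by rewrite -c3 leq_add2l.
Qed.

Theorem lemma5p18 (V : finType) (e : rel V)
  (e_sym : symmetric e) (e_irr : irreflexive e) (V_nonempty : 0 < #|V|)
  (k w : nat) (k_pos : 0 < k) (k_le_w : k <= w) :
  forall r r' : osep V,
    r \in Sk e k -> r' \in Sk e k -> leS r r' ->
    ~~ forces (Fw e k w) r -> ~~ forces (Fw e k w) (osinv r') ->
    exists X Y : {set V},
      (X, Y) \in Sk e k /\
      Flinked (Fw e k w) e k r (X, Y) /\
      Flinked (Fw e k w) e k (osinv r') (Y, X).
Proof.
move=> r r' rS r'S rr' nf nf'.
have w1 := unforced e_sym rS nf.
have w2 := unforced e_sym (Sk_inv e_sym r'S) nf'.
pose P := fun z : osep V => [&& is_sep e z, leS r z & leS z r'].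
have Pr : P r.
  by move: rS; rewrite inE /P leS_refl rr' !andbT => /andP[].
case: (arg_minnP (fun z => sord z) Pr) => s0 /and3P[s0sep rs0 s0r'] mn.
exists s0.1, s0.2; rewrite -surjective_pairing.
split; [|split].
- rewrite inE s0sep /=; have := mn r Pr; move: rS; rewrite inE => /andP[_].
  move=> h1 h2; exact: leq_ltn_trans h2 h1.
- apply: (main_link e_sym rS w1 k_le_w s0sep rs0 s0r').
  by move=> z zs rz zr'; apply: mn; rewrite /P zs rz zr'.
- rewrite -[(s0.2, s0.1)]/(osinv s0); apply: (@main_link V e e_sym k w (osinv r') (osinv r) (osinv s0) (Sk_inv e_sym r'S) w2 k_le_w (inv_sep e_sym s0sep)).
  + by rewrite leS_inv.
  + by rewrite leS_inv.
  + move=> z zs rz zr; rewrite sordI -(sordI z); apply: mn.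
    by rewrite /P inv_sep //= -leS_inv osinvK zr /= -leS_inv osinvK rz.
Qed.
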